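(* Let $m,n\ge 2$ and let $G$ be the ordered graph with vertices $v_1<\dots<v_{m+n}$ whose only edges are $v_1v_{m+1}$ and $v_mv_{m+n}$ (two crossing edges: one joining the first vertices and one joining the last vertices of the parts $\{v_1,\dots,v_m\}$ and $\{v_{m+1},\dots,v_{m+n}\}$). Then $R(G)=m+n+\max(m,n)-1$.
   Context: An ordered graph is a graph together with a specified linear ordering of its vertex set. An ordered graph $G$ is contained in an ordered graph $H$ if there is an order-preserving injection $V(G)\to V(H)$ mapping edges to edges. $R(G)$ denotes the 2-color ordered Ramsey number: the minimum $N$ such that every 2-coloring of the edges of the ordered complete graph on $N$ vertices contains a monochromatic copy of $G$. *)

(* Defs.v *)
From mathcomp Require Import all_boot.
Set Implicit Arguments. Unset Strict Implicit. Unset Printing Implicit Defensive.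

(* An ordered graph on k vertices: vertex set 'I_k with its natural order,
   edges given by a relation e; we only consult e i j for i < j, i.e. the
   edge set is {{i,j} | i < j, e i j}. *)

(* A 2-colouring of the edges of the ordered complete graph on N vertices:
   c i j is the colour of edge {i,j}, consulted only for i < j. *)

Definition mono_copy (k N : nat) (e : rel 'I_k) (c : 'I_N -> 'I_N -> bool) :=
  exists (b : bool) (f : 'I_k -> 'I_N),
    (forall i j : 'I_k, i < j -> f i < f j) /\
    (forall i j : 'I_k, i < j -> e i j -> c (f i) (f j) = b).

Definition ramsey_for (k : nat) (e : rel 'I_k) (N : nat) :=
  forall c : 'I_N -> 'I_N -> bool, mono_copy e c.

Definition is_ordered_ramsey_number (k : nat) (e : rel 'I_k) (r : nat) :=
  ramsey_for e r /\ (forall N, N < r -> ~ ramsey_for e N).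

(* The graph G of the statement, with 0-indexed vertices v_1..v_{m+n}
   corresponding to 0..m+n-1: edges v_1 v_{m+1} (0, m) and
   v_m v_{m+n} (m-1, m+n-1). *)
Definition two_crossing (m n : nat) : rel 'I_(m + n) :=
  fun i j =>
    ((val i == 0) && (val j == m)) || ((val i == m.-1) && (val j == (m + n).-1)).
Arguments two_crossing : clear implicits.

(* Main.v *)
Require Import Defs.
From mathcomp Require Import all_boot.
From mathcomp Require Import zify.

Definition gmap (m n a b x d : nat) (i : nat) : nat :=
  if i < m - 1 then a + i else if i < m then b
  else if i < m + n - 1 then x + (i - m) else d.

Lemma gmap_le m n a b x d i : 2 <= m -> 2 <= n -> a + (m-1) <= b -> b < x ->
  x + (n-1) <= d -> gmap m n a b x d i <= d.
Proof.
move=> hm hn h1 h2 h3; rewrite /gmap.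
case: ltnP => ?; [lia|]. case: ltnP => ?; [lia|]. case: ltnP => ?; lia.
Qed.

Lemma gmap_mono m n a b x d i j : 2 <= m -> 2 <= n -> a + (m-1) <= b -> b < x ->
  x + (n-1) <= d -> i < j -> j < m + n -> gmap m n a b x d i < gmap m n a b x d j.
Proof.
move=> hm hn h1 h2 h3 hij hj; rewrite /gmap.
case: (ltnP i (m-1)) => ? /=; case: (ltnP i m) => ? /=; case: (ltnP i (m+n-1)) => ? /=;
case: (ltnP j (m-1)) => ? /=; case: (ltnP j m) => ? /=; case: (ltnP j (m+n-1)) => ? /=; lia.
Qed.

Lemma copy (m n N : nat) (c : 'I_N -> 'I_N -> bool) (o : 'I_N) (a b x d : nat) :
  2 <= m -> 2 <= n -> a + (m-1) <= b -> b < x -> x + (n-1) <= d -> d < N ->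
  c (insubd o a) (insubd o x) = c (insubd o b) (insubd o d) ->
  mono_copy (two_crossing m n) c.
Proof.
move=> hm hn h1 h2 h3 hd hc.
exists (c (insubd o a) (insubd o x)), (fun i => insubd o (gmap m n a b x d (val i))).
have hv : forall i, val (insubd o (gmap m n a b x d i)) = gmap m n a b x d i.
  move=> i; rewrite val_insubd.
  have := @gmap_le m n a b x d i hm hn h1 h2 h3. case: ifP => //; lia.
split.
  move=> i j hij; rewrite !hv; apply: gmap_mono => //; exact: ltn_ord.
move=> i j hij /orP [/andP [/eqP hi /eqP hj] | /andP [/eqP hi /eqP hj]].
  rewrite hi hj /gmap.
  have -> : 0 < m - 1 by lia.
  have -> : (m < m - 1) = false by lia.
  have -> : (m < m) = false by lia.
  have -> : m < m + n - 1 by lia.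
  by rewrite addn0 subnn addn0.
rewrite hi hj /gmap.
have -> : (m.-1 < m - 1) = false by lia.
have -> : m.-1 < m by lia.
have -> : ((m+n).-1 < m - 1) = false by lia.
have -> : ((m+n).-1 < m) = false by lia.
have -> : ((m+n).-1 < m + n - 1) = false by lia.
by rewrite hc.
Qed.

Lemma five (A B C D E : bool) :
  A = B \/ C = B \/ C = D \/ E = D \/ A = E.
Proof. by case: A; case: B; case: C; case: D; case: E; intuition. Qed.

Lemma nat_gap (k : nat) (h : nat -> nat) :
  (forall x, x.+1 < k -> h x < h x.+1) ->
  forall i t, i + t < k -> h i + t <= h (i + t).
Proof.
move=> H i; elim=> [|t IH] ht; first by rewrite !addn0.
have := IH ltac:(lia). have := H (i + t) ltac:(lia). rewrite !addnS. lia.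
Qed.

Theorem proposition4p2 (m n : nat) (hm : 2 <= m) (hn : 2 <= n) :
  is_ordered_ramsey_number (two_crossing m n) (m + n + maxn m n - 1).
Proof.
split.
  move=> c.
  have hN : 0 < m + n + maxn m n - 1 by lia.
  pose o := Ordinal hN.
  case: (boolP (n <= m)) => hnm; last rewrite -ltnNge in hnm.
    have hmx : maxn m n = m by lia.
    have [e|[e|[e|[e|e]]]] := five (c (insubd o 0) (insubd o m))
      (c (insubd o (m-1)) (insubd o (2*m+n-2)))
      (c (insubd o 0) (insubd o (2*m-1)))
      (c (insubd o (2*m-2)) (insubd o (2*m+n-2)))
      (c (insubd o (m-1)) (insubd o (2*m-1))).
    - apply: (@copy m n _ c o (0) (m-1) (m) (2*m+n-2)) => //; lia.
    - apply: (@copy m n _ c o (0) (m-1) (2*m-1) (2*m+n-2)) => //; lia.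
    - apply: (@copy m n _ c o (0) (2*m-2) (2*m-1) (2*m+n-2)) => //; lia.
    - apply: (@copy m n _ c o (m-1) (2*m-2) (2*m-1) (2*m+n-2)) => //; lia.
    - apply: (@copy m n _ c o (0) (m-1) (m) (2*m-1)) => //; lia.
  have hmx : maxn m n = n by lia.
  have [e|[e|[e|[e|e]]]] := five (c (insubd o (m-1)) (insubd o (m+n-1)))
      (c (insubd o (m+n-2)) (insubd o (m+2*n-2)))
      (c (insubd o 0) (insubd o (m+n-1)))
      (c (insubd o (m-1)) (insubd o (m+2*n-2)))
      (c (insubd o 0) (insubd o m)).
  - apply: (@copy m n _ c o (m-1) (m+n-2) (m+n-1) (m+2*n-2)) => //; lia.
  - apply: (@copy m n _ c o (0) (m+n-2) (m+n-1) (m+2*n-2)) => //; lia.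
  - apply: (@copy m n _ c o (0) (m-1) (m+n-1) (m+2*n-2)) => //; lia.
  - apply: (@copy m n _ c o (0) (m-1) (m) (m+2*n-2)) => //; lia.
  - apply: (@copy m n _ c o (0) (m-1) (m) (m+n-1)) => //; lia.
move=> N hN /(_ (fun i j : 'I_N => if n <= m then val i <= m - 2 else val j <= m + n - 2)).
case=> b [f [hf he]].
have hk : 0 < m + n by lia.
pose o := Ordinal hk.
pose h x := val (f (insubd o x)).
have hv : forall x, x < m + n -> val (insubd o x : 'I_(m+n)) = x.
  by move=> x hx; rewrite val_insubd hx.
have hmono : forall x, x.+1 < m + n -> h x < h x.+1.
  move=> x hx; apply: hf; rewrite !hv //; lia.
have g1 := @nat_gap (m+n) h hmono (0) (m-1) ltac:(lia).
have g2 := @nat_gap (m+n) h hmono (m) (n-1) ltac:(lia).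
have g3 : h (m-1) < h m.
  have := hmono (m-1) ltac:(lia). by rewrite (_ : (m-1).+1 = m) //; lia.
have hlt : h (m + (n-1)) < N by apply: ltn_ord.
have e1 := he (insubd o 0) (insubd o m) ltac:(rewrite !hv; lia)
  ltac:(rewrite /two_crossing !hv ?eqxx //; lia).
have e2 := he (insubd o (m-1)) (insubd o (m+n-1)) ltac:(rewrite !hv; lia)
  ltac:(rewrite /two_crossing !hv; [|lia|lia];
        apply/orP; right; apply/andP; split; apply/eqP; lia).
rewrite -e2 in e1.
rewrite add0n in g1.
have en : m + (n - 1) = m + n - 1 by lia.
rewrite en in g2 hlt.
move: e1; rewrite /h in g1 g2 g3 hlt.
case: (boolP (n <= m)) => hnm; last rewrite -ltnNge in hnm.
  rewrite (_ : maxn m n = m) in hN; last by lia.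
  move: g1 g2 g3 hlt; set A := val (f _); set B := val (f _); set C := val (f _);
    set D := val (f _) => g1 g2 g3 hlt e1.
  have hA : A <= m - 2 by lia.
  have hB : (B <= m - 2) = false by lia.
  by rewrite hA hB in e1.
rewrite (_ : maxn m n = n) in hN; last by lia.
move: g1 g2 g3 hlt; set A := val (f _); set B := val (f _); set C := val (f _);
    set D := val (f _) => g1 g2 g3 hlt e1.
have hA : C <= m + n - 2 by lia.
have hB : (D <= m + n - 2) = false by lia.
by rewrite hA hB in e1.
Qed.
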